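(* Let $K,L$ be Henselian valued fields of characteristic zero such that $K$ is an $\mathcal{L}_{\mathrm{val}}$-substructure of $L$, i.e. $K$ is a subfield of $L$ and $\mathcal{O}_K=K\cap\mathcal{O}_L$. Then for every positive integer $N$ the inclusion $K\hookrightarrow L$ induces an injective map $\mathrm{RV}_{N,K}\hookrightarrow\mathrm{RV}_{N,L}$, and with these identifications $K$ (with its natural $\mathcal{L}_{\mathrm{RV}}$-structure) is an $\mathcal{L}_{\mathrm{RV}}$-substructure of $L$.
   Context: For a valued field $K$ with valuation ring $\mathcal{O}_K$, maximal ideal $\mathcal{M}_K$, valuation $\mathrm{ord}$, and $N\ge1$: $\mathrm{RV}_{N,K}=K^\times/(1+N\mathcal{M}_K)\cup\{0\}$, $\mathrm{rv}_N\colon K\to\mathrm{RV}_{N,K}$ the projection with $\mathrm{rv}_N(0)=0$, and $\mathrm{rv}_{N,M}\colon\mathrm{RV}_{M,K}\to\mathrm{RV}_{N,K}$ the induced maps for $N\mid M$. The language $\mathcal{L}_{\mathrm{val}}=\{0,1,+,-,\cdot,\mathcal{O}\}$ with $\mathcal{O}$ interpreted as $\mathcal{O}_K$. The multisorted language $\mathcal{L}_{\mathrm{RV}}$ (sorts $\mathrm{VF}$, $\mathrm{RV}_N$) consists of the ring language on $\mathrm{VF}$; on each $\mathrm{RV}_N$: constants $0$ and $1=\mathrm{rv}_N(1)$, multiplication (group multiplication of $K^\times/(1+N\mathcal{M}_K)$ extended by $0$), the binary relation $\mathrm{rv}_N(x)\mid\mathrm{rv}_N(y)\Leftrightarrow\mathrm{ord}\,x\le\mathrm{ord}\,y$,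 the ternary relation $\oplus(\xi_1,\xi_2,\xi_3)$ meaning there exist $x_i\in K$ with $\mathrm{rv}_N(x_i)=\xi_i$ and $x_1+x_2=x_3$; the maps $\mathrm{rv}_N$, $\mathrm{rv}_{N,M}$; and relations $P_{N,d}\subseteq\mathrm{RV}_N\times\mathrm{RV}_{N^2}^{d+1}$ where $P_{N,d}(\xi,\zeta_0,\dots,\zeta_d)$ holds iff $\xi\in\mathrm{RV}_N^\times$ and, for some (equivalently all) $a_i\in K$ with $\mathrm{rv}_{N^2}(a_i)=\zeta_i$: (i) every element of $\{\mathrm{rv}_N(\sum_{i=1}^d y_i)\mid y_i\in K,\ \mathrm{rv}_N(y_i)=\mathrm{rv}_N(ia_i)\xi^{i-1}\}$ has order $\le\min_{1\le i\le d}\mathrm{ord}(a_i\xi^{i-1})+\mathrm{ord}\,N$, and (ii) there is $\tilde\xi\in\mathrm{RV}_{N^2}$ with $\mathrm{rv}_N(\tilde\xi)=\xi$ and $\sum_{i=0}^d y_i=0$ for some $y_i\in K$ with $\mathrm{rv}_{N^2}(y_i)=\mathrm{rv}_{N^2}(a_i)\tilde\xi^i$. *)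

(* Defs.v *)
From HB Require Import structures.
From mathcomp Require Import all_boot all_order all_algebra.
Set Implicit Arguments. Unset Strict Implicit. Unset Printing Implicit Defensive.
Import Order.TTheory GRing.Theory Num.Theory.
Local Open Scope ring_scope.

Section Defs.
Variable K : fieldType.
Variable O : {pred K}.

Definition valuation_ring : Prop :=
  [/\ 1 \in O,
      (forall x y, x \in O -> y \in O -> x - y \in O),
      (forall x y, x \in O -> y \in O -> x * y \in O) &
      (forall x, x != 0 -> (x \in O) || (x^-1 \in O))].

Definition maxI : pred K := fun x => (x \in O) && ~~ ((x != 0) && (x^-1 \in O)).

Definition henselian : Prop :=
  forall p : {poly K}, p \is monic -> (forall i, p`_i \in O) ->
  forall a, a \in O -> p.[a] \in maxI -> p^`().[a] \notin maxI ->
  exists2 b, b \in O & p.[b] = 0 /\ b - a \in maxI.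

Definition henselian_valued_field : Prop := valuation_ring /\ henselian.

(* ord x <= ord y  (with ord 0 = +oo) *)
Definition val_le (x y : K) : Prop := exists2 o, o \in O & y = o * x.

(* rv_N x : the class of x in RV_N = K^x/(1 + N M_K) u {0}, as a subset of K:
   the coset x (1 + N M_K)  (which is {0} for x = 0). *)
Definition rv (N : nat) (x : K) : K -> Prop :=
  fun y => exists2 m, m \in maxI & y = x * (1 + N%:R * m).

Definition rvmul (N : nat) (xi eta : K -> Prop) : K -> Prop :=
  fun z => exists x y, [/\ xi = rv N x, eta = rv N y & rv N (x * y) z].

Definition rvdiv (N : nat) (xi eta : K -> Prop) : Prop :=
  exists x y, [/\ xi = rv N x, eta = rv N y & val_le x y].

Definition oplus (N : nat) (xi1 xi2 xi3 : K -> Prop) : Prop :=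
  exists y1 y2 y3, [/\ rv N y1 = xi1, rv N y2 = xi2, rv N y3 = xi3 & y1 + y2 = y3].

Definition rvNM (N M : nat) (xi : K -> Prop) : K -> Prop :=
  fun z => exists x, xi = rv M x /\ rv N x z.

(* P_{N,d}(xi, zeta_0, ..., zeta_d), xi in RV_N, zeta_i in RV_{N^2}
   (only the indices i <= d of zeta matter). The element xi is handled
   through a representative x, so that rv_N(i a_i) xi^(i-1) = rv_N(i a_i x^(i-1))
   and ord(a_i xi^(i-1)) = ord(a_i x^(i-1)). *)
Definition Prel (N d : nat) (xi : K -> Prop) (zeta : nat -> K -> Prop) : Prop :=
  exists (x : K) (a : nat -> K),
  [/\ xi = rv N x, x != 0,
      (forall i, (i <= d)%N -> zeta i = rv (N * N)%N (a i)),
      (forall y : nat -> K,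
         (forall i, (1 <= i <= d)%N -> rv N (y i) = rv N (i%:R * a i * x ^+ i.-1)) ->
         forall i, (1 <= i <= d)%N ->
           val_le (\sum_(1 <= j < d.+1) y j) (N%:R * (a i * x ^+ i.-1)))
    &
      (exists xt : K, rv N xt = rv N x /\
         exists y : nat -> K,
           (forall i, (i <= d)%N -> rv (N * N)%N (y i) = rv (N * N)%N (a i * xt ^+ i)) /\
           \sum_(0 <= i < d.+1) y i = 0)].

End Defs.

(* The inclusion iota : K -> L induces the map RV_{N,K} -> RV_{N,L},
   rv_N(x) |-> rv_N(iota x); clause (1) says it is well defined and injective;
   the remaining clauses say that, under this identification, every symbol of
   L_RV involving the sort RV_N is preserved and reflected (function symbols via
   their graphs).  Constants 0 = rv_N 0, 1 = rv_N 1 and the map rv_N are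
   preserved by construction of the map. *)
Definition LRV_substructure (K L : fieldType) (OK : {pred K}) (OL : {pred L})
  (iota : {rmorphism K -> L}) (N : nat) : Prop :=
  [/\
      (forall x y : K, rv OK N x = rv OK N y <-> rv OL N (iota x) = rv OL N (iota y)),
      (forall x y z : K, rvmul OK N (rv OK N x) (rv OK N y) = rv OK N z <->
                         rvmul OL N (rv OL N (iota x)) (rv OL N (iota y)) = rv OL N (iota z)),
      (forall x y : K, rvdiv OK N (rv OK N x) (rv OK N y) <->
                       rvdiv OL N (rv OL N (iota x)) (rv OL N (iota y))),
      (forall x1 x2 x3 : K, oplus OK N (rv OK N x1) (rv OK N x2) (rv OK N x3) <->
         oplus OL N (rv OL N (iota x1)) (rv OL N (iota x2)) (rv OL N (iota x3))) &
      ((forall M : nat, (0 < M)%N -> (N %| M)%N -> forall x y : K,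
         rvNM OK N M (rv OK M x) = rv OK N y <->
         rvNM OL N M (rv OL M (iota x)) = rv OL N (iota y)) /\
      (forall (d : nat) (x : K) (a : nat -> K),
         Prel OK N d (rv OK N x) (fun i => rv OK (N * N)%N (a i)) <->
         Prel OL N d (rv OL N (iota x)) (fun i => rv OL (N * N)%N (iota (a i)))))].

(* Main.v *)
Require Import Defs.
From HB Require Import structures.
From mathcomp Require Import all_boot all_order all_algebra.
From mathcomp Require Import ring.
From Stdlib Require Import FunctionalExtensionality PropExtensionality Classical.
Set Implicit Arguments. Unset Strict Implicit. Unset Printing Implicit Defensive.
Import GRing.Theory.
Local Open Scope ring_scope.

Section Gen.
Variable F : fieldType.
Variable O : {pred F}.
Hypothesis hO : valuation_ring O.

Local Notation M := (maxI O).
Local Notation vle := (val_le O).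

Lemma O1 : 1 \in O. Proof. by case: hO. Qed.
Lemma OB x y : x \in O -> y \in O -> x - y \in O. Proof. by case: hO => _ h _ _; apply: h. Qed.
Lemma OM x y : x \in O -> y \in O -> x * y \in O. Proof. by case: hO => _ _ h _; apply: h. Qed.
Lemma Otot x : x != 0 -> (x \in O) || (x^-1 \in O). Proof. by case: hO => _ _ _ h; apply: h. Qed.
Lemma O0 : 0 \in O. Proof. by rewrite -(subrr 1) OB // O1. Qed.
Lemma ON x : x \in O -> - x \in O. Proof. by move=> h; rewrite -sub0r OB // O0. Qed.
Lemma OD x y : x \in O -> y \in O -> x + y \in O.
Proof. by move=> hx hy; rewrite -(opprK y) OB // ON. Qed.
Lemma Onat n : n%:R \in O.
Proof. elim: n => [|n IH]; first exact: O0. by rewrite -addn1 natrD OD // O1. Qed.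
Lemma OX x n : x \in O -> x ^+ n \in O.
Proof. move=> hx; elim: n => [|n IH]; first by rewrite expr0 O1. by rewrite exprS OM. Qed.

Lemma MP x : (x \in M) = (x \in O) && ~~ ((x != 0) && (x^-1 \in O)).
Proof. by []. Qed.
Lemma M_O m : m \in M -> m \in O. Proof. by rewrite MP => /andP[]. Qed.
Lemma M_inv m : m \in M -> m != 0 -> m^-1 \notin O.
Proof. by rewrite MP => /andP[_ h] hm; move: h; rewrite hm. Qed.
Lemma M_intro x : x \in O -> (x != 0 -> x^-1 \notin O) -> x \in M.
Proof.
move=> hx h; rewrite MP hx /=; apply/negP => /andP[h1 h2].
by move: (h h1); rewrite h2.
Qed.
Lemma M0 : 0 \in M. Proof. by apply: M_intro; [exact: O0 | rewrite eqxx]. Qed.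
Lemma M1 : 1 \notin M. Proof. by rewrite MP invr1 O1 oner_neq0. Qed.

Lemma MMr m o : m \in M -> o \in O -> m * o \in M.
Proof.
move=> hm ho; apply: M_intro; first by rewrite OM // M_O.
move=> hmo; apply/negP => hi.
have m0 : m != 0 by apply: contraNneq hmo => ->; rewrite mul0r.
have o0 : o != 0 by apply: contraNneq hmo => ->; rewrite mulr0.
move: (M_inv hm m0); rewrite (_ : m^-1 = o * (m * o)^-1) ?OM //.
by rewrite invfM mulrCA mulfV // mulr1.
Qed.
Lemma MMl o m : o \in O -> m \in M -> o * m \in M.
Proof. by move=> ho hm; rewrite mulrC MMr. Qed.

Lemma MB x y : x \in M -> y \in M -> x - y \in M.
Proof.
move=> hx hy; apply: M_intro; first by rewrite OB // M_O.
move=> hxy; apply/negP => hi.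
have [y0|y0] := eqVneq y 0.
  by move: hxy hi; rewrite y0 subr0 => hx0; apply/negP; apply: M_inv.
have [x0|x0] := eqVneq x 0.
  move: hi; rewrite x0 sub0r invrN => /ON; rewrite opprK; apply/negP; exact: M_inv.
case/orP: (Otot (mulf_neq0 x0 (invr_neq0 y0))) => h.
  have : y^-1 = (x - y)^-1 * (x / y - 1).
    by field; rewrite y0 hxy.
  by move=> e; move: (M_inv hy y0); rewrite e OM // OB // O1.
have : x^-1 = (x - y)^-1 * (1 - y / x).
  by field; rewrite x0 hxy.
move=> e; move: (M_inv hx x0); rewrite e OM // OB // ?O1 //.
by move: h; rewrite invfM invrK mulrC.
Qed.
Lemma MN x : x \in M -> - x \in M. Proof. by move=> h; rewrite -sub0r MB // M0. Qed.
Lemma MD x y : x \in M -> y \in M -> x + y \in M.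
Proof. by move=> hx hy; rewrite -(opprK y) MB // MN. Qed.

Lemma unitM m : m \in M -> (1 + m != 0) /\ ((1 + m)^-1 \in O).
Proof.
move=> hm.
have h1 : 1 + m != 0.
  apply/negP => /eqP e; have em : m = -1 by rewrite -(addKr 1 m) e addr0.
  by move: (M_inv hm); rewrite em invrN invr1 ON ?O1 // oppr_eq0 oner_neq0 => /(_ isT).
split=> //; apply/negPn/negP => hi.
have : 1 + m \in M by apply: M_intro; [rewrite OD // ?O1 ?M_O | by move=> _].
by move=> h; move: (MB h hm); rewrite addrK; apply/negP; exact: M1.
Qed.

Lemma MNat N m : m \in M -> N%:R * m \in M.
Proof. by move=> h; rewrite MMl // Onat. Qed.

Lemma set_ext (A B : F -> Prop) : (forall z, A z <-> B z) -> A = B.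
Proof.
move=> h; apply: functional_extensionality => z; apply: propositional_extensionality; exact: h.
Qed.

Lemma rv_eqP N u v :
  rv O N u = rv O N v <-> exists2 m, m \in M & v = u * (1 + N%:R * m).
Proof.
split.
  move=> e; have : rv O N v v by exists 0; rewrite ?M0 // mulr0 addr0 mulr1.
  by rewrite -e.
case=> m hm ->; apply: set_ext => z; split.
  case=> m' hm' ->; have [h1 h2] := unitM (MNat N hm).
  exists ((m' - m) * (1 + N%:R * m)^-1); first by rewrite MMr // MB.
  by field.
case=> m' hm' ->; exists (m + m' + N%:R * m * m'); first by rewrite !MD // MMr ?M_O // MNat.
by ring.
Qed.

Lemma rv_refl N u : rv O N u u.
Proof. by exists 0; rewrite ?M0 // mulr0 addr0 mulr1. Qed.

Lemma rv_mulr N u v z : rv O N u = rv O N v -> rv O N (u * z) = rv O N (v * z).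
Proof.
case/rv_eqP=> m hm ->; apply/rv_eqP; exists m => //; ring.
Qed.

Lemma rv_prod N u u' v v' : rv O N u = rv O N u' -> rv O N v = rv O N v' ->
  rv O N (u * v) = rv O N (u' * v').
Proof.
move=> h1 h2; rewrite (rv_mulr v h1) mulrC (rv_mulr u' h2) mulrC //.
Qed.

Lemma rv_expn N u v k : rv O N u = rv O N v -> rv O N (u ^+ k) = rv O N (v ^+ k).
Proof.
move=> h; elim: k => [|k IH]; first by rewrite !expr0.
by rewrite !exprS; apply: rv_prod.
Qed.

Lemma rv_dvd N N' u v : (N %| N')%N -> rv O N' u = rv O N' v -> rv O N u = rv O N v.
Proof.
case/dvdnP=> k ->; case/rv_eqP=> m hm ->; apply/rv_eqP.
exists (k%:R * m); first by rewrite MNat.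
by rewrite natrM; ring.
Qed.

Lemma val_le_refl x : vle x x.
Proof. by exists 1; rewrite ?O1 ?mul1r. Qed.
Lemma val_le_trans x y z : vle x y -> vle y z -> vle x z.
Proof. case=> o ho -> [o' ho' ->]; exists (o' * o); rewrite ?OM // mulrA //. Qed.
Lemma val_le0 y : vle 0 y -> y = 0.
Proof. by case=> o _ ->; rewrite mulr0. Qed.
Lemma val_le_total x y : vle x y \/ vle y x.
Proof.
have [->|x0] := eqVneq x 0; first by right; exists 0; rewrite ?O0 ?mul0r.
have [->|y0] := eqVneq y 0; first by left; exists 0; rewrite ?O0 ?mul0r.
case/orP: (Otot (mulf_neq0 y0 (invr_neq0 x0))) => h.
  by left; exists (y / x) => //; rewrite divfK.
right; exists (x / y); last by rewrite divfK.
by move: h; rewrite invfM invrK mulrC.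
Qed.
Lemma val_le_not x y : ~ vle x y -> exists2 p, p \in M & x = y * p.
Proof.
move=> h.
have y0 : y != 0 by apply/negP => /eqP e; apply: h; exists 0; rewrite ?O0 ?e ?mul0r.
have [x0|x0] := eqVneq x 0; first by exists 0; rewrite ?M0 ?x0 ?mulr0.
exists (x / y); last by rewrite mulrC divfK.
apply: M_intro.
  case/orP: (Otot (mulf_neq0 y0 (invr_neq0 x0))) => h'.
    by exfalso; apply: h; exists (y / x); rewrite ?divfK.
  by move: h'; rewrite invfM invrK mulrC.
move=> _; rewrite invfM invrK mulrC; apply/negP => h'.
by apply: h; exists (y / x); rewrite ?divfK.
Qed.

Lemma val_le_unit x y m : m \in M -> vle x y -> vle (x * (1 + m)) y.
Proof.
move=> hm [o ho ->]; have [h1 h2] := unitM hm.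
exists (o * (1 + m)^-1); first by rewrite OM.
by field.
Qed.

Lemma val_le_rv N u u' v v' : rv O N u = rv O N u' -> rv O N v = rv O N v' ->
  vle u v -> vle u' v'.
Proof.
case/rv_eqP=> m hm -> /rv_eqP [m' hm' ->] h.
apply: val_le_unit; first exact: MNat.
case: h => o ho ->; exists (o * (1 + N%:R * m')); last by ring.
by rewrite OM // OD ?O1 // M_O // MNat.
Qed.

Lemma exists_min (b : nat -> F) d :
  exists j, (j <= d)%N /\ forall i, (i <= d)%N -> vle (b j) (b i).
Proof.
elim: d => [|d [j [hj hm]]].
  by exists 0%N; split=> // i; rewrite leqn0 => /eqP ->; exact: val_le_refl.
case: (val_le_total (b j) (b d.+1)) => h.
  exists j; split; first by rewrite (leq_trans hj).
  by move=> i; rewrite leq_eqVlt ltnS => /orP[/eqP ->|]; [|exact: hm].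
exists d.+1; split=> // i; rewrite leq_eqVlt ltnS => /orP[/eqP ->|hi].
  exact: val_le_refl.
exact: val_le_trans h (hm i hi).
Qed.

Lemma sum_M (I : Type) (r : seq I) (P : pred I) (G : I -> F) c :
  (forall i, P i -> exists2 e, e \in M & G i = c * e) ->
  exists2 e, e \in M & \sum_(i <- r | P i) G i = c * e.
Proof.
move=> h; apply: (big_ind (fun z => exists2 e, e \in M & z = c * e)) => //.
  by exists 0; rewrite ?M0 ?mulr0.
by move=> x y [e he ->] [e' he' ->]; exists (e + e'); rewrite ?MD ?mulrDr.
Qed.

Lemma binom_O u i : u \in O -> exists2 o, o \in O & (1 + u) ^+ i = 1 + i%:R * u + u ^+ 2 * o.
Proof.
move=> hu; elim: i => [|i [o ho IH]].
  by exists 0; rewrite ?O0 // expr0 mul0r mulr0 !addr0.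
exists (i%:R + o + u * o); first by rewrite !OD ?Onat ?OM.
by rewrite exprSr IH; ring.
Qed.

Lemma rvmul_rv N x y : rvmul O N (rv O N x) (rv O N y) = rv O N (x * y).
Proof.
apply: set_ext => z; split.
  by case=> [x' [y' [e1 e2 h]]]; rewrite (rv_prod e1 e2).
by move=> h; exists x, y.
Qed.

Lemma rvdiv_rv N x y : rvdiv O N (rv O N x) (rv O N y) <-> vle x y.
Proof.
split; last by move=> h; exists x, y.
by case=> [x' [y' [e1 e2 h]]]; apply: val_le_rv h; [exact: (esym e1)|exact: (esym e2)].
Qed.

Lemma rvNM_rv N N' x : (N %| N')%N -> rvNM O N N' (rv O N' x) = rv O N x.
Proof.
move=> hd; apply: set_ext => z; split.
  by case=> x' [e h]; rewrite (rv_dvd hd e).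
by move=> h; exists x.
Qed.

Definition PI N d x (a : nat -> F) :=
  forall y : nat -> F,
    (forall i, (1 <= i <= d)%N -> rv O N (y i) = rv O N (i%:R * a i * x ^+ i.-1)) ->
    forall i, (1 <= i <= d)%N ->
      vle (\sum_(1 <= j < d.+1) y j) (N%:R * (a i * x ^+ i.-1)).

Definition PII N d x (a : nat -> F) :=
  exists xt : F, rv O N xt = rv O N x /\
    exists y : nat -> F,
      (forall i, (i <= d)%N -> rv O (N * N)%N (y i) = rv O (N * N)%N (a i * xt ^+ i)) /\
      \sum_(0 <= i < d.+1) y i = 0.

Lemma Prel_norm N d x a :
  Prel O N d (rv O N x) (fun i => rv O (N * N)%N (a i)) <->
  [/\ x != 0, PI N d x a & PII N d x a].
Proof.
split; last by case=> h1 h2 h3; exists x, a; split.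
case=> x0 [a0 [hx hx0 hz hI hII]].
have ha i : (i <= d)%N -> rv O N (a i) = rv O N (a0 i).
  by move=> hi; apply: (rv_dvd (dvdn_mull N (dvdnn N))); exact: hz.
split.
- case/rv_eqP: hx => m _ e; apply: contraNneq hx0 => ex.
  by rewrite e ex mul0r.
- move=> y hy i hi.
  have hc j : (1 <= j <= d)%N ->
      rv O N (j%:R * a j * x ^+ j.-1) = rv O N (j%:R * a0 j * x0 ^+ j.-1).
    move=> /andP[_ hj]; apply: rv_prod; last exact: (rv_expn _ hx).
    by apply: rv_prod => //; exact: ha.
  have := hI y (fun j hj => etrans (hy j hj) (hc j hj)) i hi.
  apply: val_le_rv => //; apply: rv_prod => //; apply: rv_prod.
    by case/andP: hi => _ hi; symmetry; exact: (ha i hi).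
  exact: (rv_expn _ (esym hx)).
- case: hII => xt [ext [y [hy hs]]]; exists xt; split; first by rewrite ext.
  exists y; split => // i hi; rewrite hy //; apply: rv_mulr; symmetry; exact: hz.
Qed.

Lemma PI_char N d x a :
  PI N d x a <-> forall i, (1 <= i <= d)%N ->
    vle (\sum_(1 <= j < d.+1) j%:R * a j * x ^+ j.-1) (N%:R * (a i * x ^+ i.-1)).
Proof.
split; first by move=> h; apply: h.
move=> h y hy i hi.
set s := \sum_(1 <= j < d.+1) j%:R * a j * x ^+ j.-1.
have [e he hse] : exists2 e, e \in M & \sum_(1 <= j < d.+1) y j - s = s * e.
  rewrite /s -sumrB big_nat_cond; apply: sum_M => j; rewrite andbT => hj.
  have [m hm ey] := (rv_eqP _ _ _).1 (esym (hy j hj)).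
  have [o ho eo] := h j hj.
  exists (j%:R * o * m); first by rewrite MMl // OM // Onat.
  have -> : y j - j%:R * a j * x ^+ j.-1 = j%:R * (N%:R * (a j * x ^+ j.-1)) * m.
    by rewrite ey; ring.
  by rewrite eo; ring.
have -> : \sum_(1 <= j < d.+1) y j = s * (1 + e) by rewrite mulrDr mulr1 -hse addrC subrK.
exact: val_le_unit (h i hi).
Qed.

Lemma PII_finish N d x a t j Q :
  rv O N t = rv O N x -> (j <= d)%N -> Q \in M ->
  \sum_(0 <= i < d.+1) a i * t ^+ i = (N * N)%N%:R * (a j * t ^+ j) * Q ->
  PII N d x a.
Proof.
move=> ht hj hQ hs; exists t; split => //.
set f := \sum_(0 <= i < d.+1) a i * t ^+ i.
exists (fun i => a i * t ^+ i - (if i == j then f else 0)); split.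
  move=> i hi; case: eqP => [->|_]; last by rewrite subr0.
  symmetry; apply/rv_eqP; exists (- Q); first exact: MN.
  by rewrite /f hs; ring.
by rewrite sumrB -/f -big_mkcond big_nat1_eq /= ltnS hj subrr.
Qed.

Lemma min3 x1 x2 x3 : exists w, [/\ w = x1 \/ w = x2 \/ w = x3, vle w x1, vle w x2 & vle w x3].
Proof.
have [j [hj hm]] := exists_min (fun i => nth 0 [:: x1; x2; x3] i) 2.
have h0 := hm 0%N isT; have h1 := hm 1%N isT; have h2 := hm 2%N isT.
move: h0 h1 h2; case: j hj {hm} => [|[|[|j]]] //= _ h0 h1 h2.
- by exists x1; split; auto.
- by exists x2; split; auto.
- by exists x3; split; auto.
Qed.

End Gen.

Section Transfer.
Variables (K L : fieldType) (OK : {pred K}) (OL : {pred L}).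
Variable iota : {rmorphism K -> L}.
Hypothesis hOK : valuation_ring OK.
Hypothesis hOL : valuation_ring OL.
Hypothesis hiota : forall x : K, (x \in OK) = (iota x \in OL).

Lemma M_iota x : (x \in maxI OK) = (iota x \in maxI OL).
Proof. by rewrite !MP -hiota fmorph_eq0 -fmorphV -hiota. Qed.

Lemma reflM u w m : iota u = iota w * m -> m \in maxI OL ->
  exists2 m', m' \in maxI OK & u = w * m'.
Proof.
move=> e hm; have [w0|w0] := eqVneq w 0.
  exists 0; first exact: M0.
  by apply: (fmorph_inj iota); rewrite e w0 rmorph0 !mul0r rmorph0.
exists (u / w); last by rewrite mulrC divfK.
rewrite M_iota (_ : iota (u / w) = m) //.
by rewrite fmorph_div e mulrAC divff ?mul1r // fmorph_eq0.
Qed.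

Lemma reflO u w o : iota u = iota w * o -> o \in OL ->
  exists2 o', o' \in OK & u = w * o'.
Proof.
move=> e hm; have [w0|w0] := eqVneq w 0.
  exists 0; first exact: O0.
  by apply: (fmorph_inj iota); rewrite e w0 rmorph0 !mul0r rmorph0.
exists (u / w); last by rewrite mulrC divfK.
rewrite hiota (_ : iota (u / w) = o) //.
by rewrite fmorph_div e mulrAC divff ?mul1r // fmorph_eq0.
Qed.

Lemma vle_iota x y : val_le OK x y <-> val_le OL (iota x) (iota y).
Proof.
split.
  by case=> o ho ->; exists (iota o); rewrite ?rmorphM // -hiota.
case=> o ho e; have [o' ho' ->] := reflO (etrans e (mulrC _ _)) ho.
by exists o'; rewrite // mulrC.
Qed.

Lemma rv_iota N u v : rv OK N u = rv OK N v <-> rv OL N (iota u) = rv OL N (iota v).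
Proof.
split.
  case/(rv_eqP hOK) => m hm ->; apply/(rv_eqP hOL); exists (iota m); first by rewrite -M_iota.
  by rewrite rmorphM rmorphD rmorph1 rmorphM rmorph_nat.
case/(rv_eqP hOL) => m hm e; apply/(rv_eqP hOK).
have e' : iota (v - u) = iota (N%:R * u) * m.
  by rewrite rmorphB e rmorphM rmorph_nat; ring.
have [m' hm' e2] := reflM e' hm; exists m' => //.
by rewrite -(subrK u v) e2; ring.
Qed.


Lemma oplus_iota N x1 x2 x3 :
  oplus OK N (rv OK N x1) (rv OK N x2) (rv OK N x3) <->
  oplus OL N (rv OL N (iota x1)) (rv OL N (iota x2)) (rv OL N (iota x3)).
Proof.
split.
  case=> y1 [y2 [y3 [e1 e2 e3 s]]]; exists (iota y1), (iota y2), (iota y3).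
  by split; rewrite -?rmorphD ?s //; apply/rv_iota.
case=> y1 [y2 [y3 [e1 e2 e3 s]]].
have [m1 hm1 ey1] := (rv_eqP hOL _ _ _).1 (esym e1).
have [m2 hm2 ey2] := (rv_eqP hOL _ _ _).1 (esym e2).
have [m3 hm3 ey3] := (rv_eqP hOL _ _ _).1 (esym e3).
have [w [hw [o1 ho1 h1] [o2 ho2 h2] [o3 ho3 h3]]] := min3 hOK x1 x2 x3.
have e : iota (x1 + x2 - x3) = iota (N%:R * w) *
     (iota o3 * m3 - iota o1 * m1 - iota o2 * m2).
  have s0 : y1 + y2 - y3 = 0 by rewrite s subrr.
  move: s0; rewrite ey1 ey2 ey3 h1 h2 h3 !rmorphM => s0.
  rewrite rmorphB rmorphD !rmorphM rmorph_nat -[LHS]subr0 -s0; ring.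
have hm : iota o3 * m3 - iota o1 * m1 - iota o2 * m2 \in maxI OL.
  by rewrite !MB // MMl // -hiota.
have [m' hm' ed] := reflM e hm.
case: hw => [ew|[ew|ew]]; rewrite {}ew in ed.
- exists (x1 - (x1 + x2 - x3)), x2, x3; split => //; last by ring.
  symmetry; apply/(rv_eqP hOK); exists (- m'); first exact: MN.
  by rewrite ed; ring.
- exists x1, (x2 - (x1 + x2 - x3)), x3; split => //; last by ring.
  symmetry; apply/(rv_eqP hOK); exists (- m'); first exact: MN.
  by rewrite ed; ring.
- exists x1, x2, (x3 + (x1 + x2 - x3)); split => //; last by ring.
  symmetry; apply/(rv_eqP hOK); exists m' => //.
  by rewrite ed; ring.
Qed.

Lemma PI_iota N d x a : PI OK N d x a <-> PI OL N d (iota x) (fun i => iota (a i)).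
Proof.
rewrite (PI_char hOK) (PI_char hOL).
have E1 : iota (\sum_(1 <= j < d.+1) j%:R * a j * x ^+ j.-1) =
          \sum_(1 <= j < d.+1) j%:R * iota (a j) * iota x ^+ j.-1.
  by rewrite rmorph_sum; apply: eq_bigr => j _; rewrite !rmorphM rmorph_nat rmorphXn.
have E2 i : iota (N%:R * (a i * x ^+ i.-1)) = N%:R * (iota (a i) * iota x ^+ i.-1).
  by rewrite !rmorphM rmorph_nat rmorphXn.
split=> h i hi.
  by rewrite -E1 -E2; apply/vle_iota; exact: h.
by apply/vle_iota; rewrite E1 E2; exact: h.
Qed.

Lemma PII_iota N d x a : PII OK N d x a <-> PII OL N d (iota x) (fun i => iota (a i)).
Proof.
split.
  case=> xt [ext [y [hy hs]]]; exists (iota xt); split; first exact/rv_iota.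
  exists (fun i => iota (y i)); split; last by rewrite -rmorph_sum hs rmorph0.
  by move=> i hi; rewrite -rmorphXn -rmorphM; apply/rv_iota; exact: hy.
case=> xt [ext [y [hy hs]]].
have [mu hmu ext'] := (rv_eqP hOL _ _ _).1 (esym ext).
have [j [hj hmin]] := exists_min hOK (fun i => a i * x ^+ i) d.
have [E hE eE] : exists2 E, E \in maxI OL &
   \sum_(0 <= i < d.+1) (y i - iota (a i * x ^+ i) - N%:R * mu * iota (i%:R * (a i * x ^+ i)))
   = (N * N)%N%:R * iota (a j * x ^+ j) * E.
  rewrite big_nat_cond; apply: (sum_M hOL) => i; rewrite andbT => /andP[_ hi].
  have [mi hmi eyi] := (rv_eqP hOL _ _ _).1 (esym (hy i hi)).
  have [o ho eo] := binom_O hOL i (M_O (MNat hOL N hmu)).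
  have [o' ho' eo'] := hmin i hi.
  set w := (1 + N%:R * mu) ^+ i.
  exists (iota o' * (mu * (mu * o) + w * mi)).
    apply: (MMl hOL); first by rewrite -hiota.
    apply: (MD hOL); first exact: (MMr hOL hmu (OM hOL (M_O hmu) ho)).
    apply: (MMl hOL) => //; apply: (OX hOL); apply: (OD hOL (O1 hOL)).
    exact: (M_O (MNat hOL N hmu)).
  rewrite eyi ext' exprMn -/w !natrM !rmorphM rmorph_nat !rmorphXn.
  rewrite (mulrA (iota (a i)) (iota x ^+ i)).
  have -> : iota (a i) * iota x ^+ i = iota o' * (iota (a j) * iota x ^+ j).
    by rewrite -rmorphXn -rmorphM eo' !rmorphM rmorphXn.
  rewrite /w eo; ring.
rewrite !sumrB hs -mulr_sumr -!rmorph_sum in eE.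
set F := \sum_(0 <= i < d.+1) a i * x ^+ i in eE.
set G := \sum_(0 <= i < d.+1) i%:R * (a i * x ^+ i) in eE.
have key : iota F = - (N%:R * mu * iota G) - (N * N)%N%:R * iota (a j * x ^+ j) * E.
  by rewrite -eE; ring.
case: (classic (val_le OK (N%:R * (a j * x ^+ j)) G)) => hG.
  case: hG => o ho eG.
  have e : iota F = iota ((N * N)%N%:R * (a j * x ^+ j)) * (- (mu * iota o) - E).
    by rewrite key eG !natrM !rmorphM !rmorph_nat; ring.
  have hm : - (mu * iota o) - E \in maxI OL.
    by rewrite MB // MN // MMr // -hiota.
  have [m' hm' eF] := reflM e hm.
  by apply: (PII_finish hOK (t := x) (j := j) (Q := m')).
have [p hp ep] := val_le_not hOK hG.
have eb : N%:R * iota (a j * x ^+ j) = iota G * iota p.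
  by rewrite -(rmorph_nat iota N) -!rmorphM ep.
have e2 : iota F = iota (N%:R * G) * (- mu - iota p * E).
  have eb2 : (N * N)%N%:R * iota (a j * x ^+ j) = N%:R * (iota G * iota p).
    by rewrite natrM -mulrA eb.
  by rewrite key eb2 rmorphM rmorph_nat; ring.
have hm2 : - mu - iota p * E \in maxI OL.
  by rewrite MB // ?MN // MMl // -hiota M_O.
have [nu' hnu' eF] := reflM e2 hm2.
have hnu : - nu' \in maxI OK by exact: MN.
pose t := x * (1 + N%:R * - nu').
have [Q0 hQ0 eQ0] : exists2 Q0, Q0 \in maxI OK &
   \sum_(0 <= i < d.+1) (a i * t ^+ i - a i * x ^+ i - N%:R * - nu' * (i%:R * (a i * x ^+ i)))
   = (N * N)%N%:R * (a j * x ^+ j) * Q0.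
  rewrite big_nat_cond; apply: (sum_M hOK) => i; rewrite andbT => /andP[_ hi].
  have [o ho eo] := binom_O hOK i (M_O (MNat hOK N hnu)).
  have [o' ho' eo'] := hmin i hi.
  exists (o' * (- nu' * (- nu' * o))).
    by rewrite MMl // MMr // OM // M_O.
  have -> : a i * t ^+ i = a i * x ^+ i * (1 + N%:R * - nu') ^+ i by rewrite exprMn mulrA.
  rewrite eo eo' natrM; ring.
rewrite !sumrB -mulr_sumr -/F -/G in eQ0.
have hsum : \sum_(0 <= i < d.+1) a i * t ^+ i = (N * N)%N%:R * (a j * x ^+ j) * Q0.
  by rewrite -eQ0 eF; ring.
have [hu1 hu2] := unitM hOK (MNat hOK N hnu).
pose w := (1 + N%:R * - nu') ^+ j.
have hw : w != 0 by rewrite expf_neq0.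
apply: (PII_finish hOK (t := t) (j := j) (Q := Q0 * w^-1)) => //.
- by symmetry; apply/(rv_eqP hOK); exists (- nu').
- by rewrite MMr // -exprVn OX.
have -> : a j * t ^+ j = a j * x ^+ j * w by rewrite exprMn mulrA.
by rewrite hsum; field.
Qed.

End Transfer.

Theorem proposition3p1 (K L : fieldType) (OK : {pred K}) (OL : {pred L})
  (iota : {rmorphism K -> L}) :
  henselian_valued_field OK -> henselian_valued_field OL ->
  [pchar K] =i pred0 -> [pchar L] =i pred0 ->
  (forall x : K, (x \in OK) = (iota x \in OL)) ->
  forall N : nat, (0 < N)%N -> LRV_substructure OK OL iota N.
Proof.
move=> [hOK _] [hOL _] _ _ hiota N hN; split.
- by move=> x y; apply: rv_iota.
- move=> x y z; rewrite (rvmul_rv hOK) (rvmul_rv hOL) -rmorphM.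
  by apply: rv_iota.
- move=> x y; apply: iff_trans (rvdiv_rv hOK _ _ _) _.
  apply: iff_trans _ (iff_sym (rvdiv_rv hOL _ _ _)).
  by apply: vle_iota.
- by move=> x1 x2 x3; apply: oplus_iota.
split.
- move=> M hM hd x y; rewrite (rvNM_rv hOK) // (rvNM_rv hOL) //.
  by apply: rv_iota.
- move=> d x a; apply: iff_trans (Prel_norm hOK _ _ _ _) _.
  apply: iff_trans _ (iff_sym (Prel_norm hOL N d (iota x) (fun i => iota (a i)))).
  have h1 := PI_iota hOK hOL hiota N d x a.
  have h2 := PII_iota hOK hOL hiota N d x a.
  rewrite fmorph_eq0; split; case=> ha hb hc; split => //.
  + by apply/h1.
  + by apply/h2.
  + by apply/h1.
  + by apply/h2.
Qed.
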